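(* Let $(A,\sigma)$ be a ribbon algebra in a braided monoidal category $\mathcal C$ which is also a Hopf algebra in $\mathcal C$ with invertible antipode $S$, and let $M$ be an $A$-bimodule in $\mathcal C$. Then the morphism $$\blacktriangleleft_R=\triangleleft\;\triangleright_{0,1}\,(\sigma S^{-1}\otimes\mathrm{id}^{\otimes2})\,\Psi_{0,1}\,(\mathrm{id}_M\otimes\Delta):M\otimes A\to M$$ is a right action of $A$ on $M$, i.e. $\blacktriangleleft_R(\blacktriangleleft_R\otimes\mathrm{id}_A)=\blacktriangleleft_R(\mathrm{id}_M\otimes\mu)$. (Here $\Psi_{0,1}:M\otimes A\otimes A\to A\otimes M\otimes A$ braids $M$ with the first copy of $A$.)
   Context: $\mathcal C$ is a braided monoidal category with abelian-group Hom-sets, bilinear composition and tensor product; associativity and unit constraints suppressed; unit object $\mathbf 1$; braiding $\Psi$. Composition read from right to left; in $V_0\otimes\cdots\otimes V_k$ (factors numbered from 0), $f_{i,i+1}$ denotes $f$ applied to factors $i,i+1$. An algebra in $\mathcal C$: object $A$ with associative unital $\mu:A\otimes A\to A$, $\eta:\mathbf 1\to A$. Ribbon algebra: algebra with invertible morphism $\sigma:A\to A$, $\sigma\mu=\mu(\sigma\otimes\sigma)\Psi^2$, $\sigma\eta=\eta$. A Hopf algebra in $\mathcal C$ is an algebra $A$ with morphisms $\Delta:A\to A\otimes A$, $\varepsilon:A\to\mathbf1$ forming a coassociative counital coalgebra, such that $\Delta\mu=(\mu\otimes\mu)\Psi_{1,2}(\Delta\otimes\Delta)$, $\varepsilon\mu=\varepsilon\otimes\varepsilon$,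 $\Delta\eta=\eta\otimes\eta$, $\varepsilon\eta=\mathrm{id}_{\mathbf 1}$, together with a morphism $S:A\to A$ (antipode) with $\mu(S\otimes\mathrm{id})\Delta=\eta\varepsilon=\mu(\mathrm{id}\otimes S)\Delta$. An $A$-bimodule in $\mathcal C$: object $M$ with morphisms $\triangleright:A\otimes M\to M$, $\triangleleft:M\otimes A\to M$, associative unital left resp. right actions with $\triangleright(\mathrm{id}\otimes\triangleleft)=\triangleleft(\triangleright\otimes\mathrm{id})$. *)

(* Defs.v *)
(* The associativity and unit constraints, suppressed in the paper, are
   written out explicitly here (non-strict monoidal category). *)
From HB Require Import structures.
From mathcomp Require Import all_boot all_algebra.
Set Implicit Arguments. Unset Strict Implicit. Unset Printing Implicit Defensive.
Import GRing.Theory.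
Local Open Scope ring_scope.

Record CatData := {
  Obj : Type;
  Mor : Obj -> Obj -> zmodType;
  idm : forall a, Mor a a;
  comp : forall a b c, Mor b c -> Mor a b -> Mor a c;
  tens : Obj -> Obj -> Obj;
  tensm : forall a b c d, Mor a b -> Mor c d -> Mor (tens a c) (tens b d);
  unit_obj : Obj;
  assoc : forall a b c, Mor (tens (tens a b) c) (tens a (tens b c));
  assocI : forall a b c, Mor (tens a (tens b c)) (tens (tens a b) c);
  lunit : forall a, Mor (tens unit_obj a) a;
  lunitI : forall a, Mor a (tens unit_obj a);
  runit : forall a, Mor (tens a unit_obj) a;
  runitI : forall a, Mor a (tens a unit_obj);
  braid : forall a b, Mor (tens a b) (tens b a);
  braidI : forall a b, Mor (tens b a) (tens a b)
}.

Arguments idm {_} a.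
Arguments comp {_ a b c}.
Arguments tens {_}.
Arguments tensm {_ a b c d}.
Arguments unit_obj {_}.
Arguments assoc {_} a b c.
Arguments assocI {_} a b c.
Arguments lunit {_} a.
Arguments lunitI {_} a.
Arguments runit {_} a.
Arguments runitI {_} a.
Arguments braid {_} a b.
Arguments braidI {_} a b.

Notation "g ∘ f" := (comp g f) (at level 40, left associativity).
Notation "f ⊗ g" := (tensm f g) (at level 35).
Notation "a ⊗o b" := (tens a b) (at level 35).

Section CatAx.
Variable D : CatData.
Implicit Types a b c d e k : Obj D.

Definition cat_axioms : Prop :=
  (forall a b c d (f : Mor a b) (g : Mor b c) (h : Mor c d), h ∘ (g ∘ f) = (h ∘ g) ∘ f) /\
  (forall a b (f : Mor a b), idm b ∘ f = f) /\
  (forall a b (f : Mor a b), f ∘ idm a = f) /\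
  (forall a b c (g g' : Mor b c) (f : Mor a b), (g + g') ∘ f = g ∘ f + g' ∘ f) /\
  (forall a b c (g : Mor b c) (f f' : Mor a b), g ∘ (f + f') = g ∘ f + g ∘ f') /\
  (forall a c, idm a ⊗ idm c = idm (a ⊗o c)) /\
  (forall a b e c d k (f : Mor a b) (f' : Mor b e) (g : Mor c d) (g' : Mor d k),
      (f' ∘ f) ⊗ (g' ∘ g) = (f' ⊗ g') ∘ (f ⊗ g)) /\
  (forall a b c d (f f' : Mor a b) (g : Mor c d), (f + f') ⊗ g = f ⊗ g + f' ⊗ g) /\
  (forall a b c d (f : Mor a b) (g g' : Mor c d), f ⊗ (g + g') = f ⊗ g + f ⊗ g') /\
  (forall a b c, assocI a b c ∘ assoc a b c = idm _) /\
  (forall a b c, assoc a b c ∘ assocI a b c = idm _) /\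
  (forall a a' b b' c c' (f : Mor a a') (g : Mor b b') (h : Mor c c'),
      assoc a' b' c' ∘ ((f ⊗ g) ⊗ h) = (f ⊗ (g ⊗ h)) ∘ assoc a b c) /\
  (forall a, lunitI a ∘ lunit a = idm _) /\
  (forall a, lunit a ∘ lunitI a = idm _) /\
  (forall a b (f : Mor a b), lunit b ∘ (idm unit_obj ⊗ f) = f ∘ lunit a) /\
  (forall a, runitI a ∘ runit a = idm _) /\
  (forall a, runit a ∘ runitI a = idm _) /\
  (forall a b (f : Mor a b), runit b ∘ (f ⊗ idm unit_obj) = f ∘ runit a) /\
  (forall a b c d,
      (idm a ⊗ assoc b c d) ∘ assoc a (b ⊗o c) d ∘ (assoc a b c ⊗ idm d)
      = assoc a b (c ⊗o d) ∘ assoc (a ⊗o b) c d) /\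
  (forall a b, (idm a ⊗ lunit b) ∘ assoc a unit_obj b = runit a ⊗ idm b) /\
  (forall a b, braidI a b ∘ braid a b = idm _) /\
  (forall a b, braid a b ∘ braidI a b = idm _) /\
  (forall a a' b b' (f : Mor a a') (g : Mor b b'),
      braid a' b' ∘ (f ⊗ g) = (g ⊗ f) ∘ braid a b) /\
  (forall a b c,
      assoc b c a ∘ braid a (b ⊗o c) ∘ assoc a b c
      = (idm b ⊗ braid a c) ∘ assoc b a c ∘ (braid a b ⊗ idm c)) /\
  (forall a b c,
      assocI c a b ∘ braid (a ⊗o b) c ∘ assocI a b c
      = (braid a c ⊗ idm b) ∘ assocI a c b ∘ (idm a ⊗ braid b c)).

End CatAx.

Record BraidedCat := {
  bc_data :> CatData;
  bc_axioms : cat_axioms bc_data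
}.

Section Structures.
Variable C : BraidedCat.
Implicit Types A M : Obj C.

Definition is_algebra (A : Obj C) (mu : Mor (A ⊗o A) A) (eta : Mor unit_obj A) : Prop :=
  mu ∘ (mu ⊗ idm A) = mu ∘ (idm A ⊗ mu) ∘ assoc A A A /\
  mu ∘ (eta ⊗ idm A) = lunit A /\
  mu ∘ (idm A ⊗ eta) = runit A.

Definition is_ribbon_algebra (A : Obj C) (mu : Mor (A ⊗o A) A) (eta : Mor unit_obj A)
    (sigma : Mor A A) : Prop :=
  is_algebra mu eta /\
  (exists sigma' : Mor A A, sigma ∘ sigma' = idm A /\ sigma' ∘ sigma = idm A) /\
  sigma ∘ mu = mu ∘ (sigma ⊗ sigma) ∘ braid A A ∘ braid A A /\
  sigma ∘ eta = eta.

Definition is_coalgebra (A : Obj C) (Delta : Mor A (A ⊗o A)) (eps : Mor A unit_obj) : Prop :=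
  (Delta ⊗ idm A) ∘ Delta = assocI A A A ∘ (idm A ⊗ Delta) ∘ Delta /\
  (eps ⊗ idm A) ∘ Delta = lunitI A /\
  (idm A ⊗ eps) ∘ Delta = runitI A.

Definition Psi12 (A : Obj C) : Mor ((A ⊗o A) ⊗o (A ⊗o A)) ((A ⊗o A) ⊗o (A ⊗o A)) :=
  assocI A A (A ⊗o A)
  ∘ (idm A ⊗ (assoc A A A ∘ (braid A A ⊗ idm A) ∘ assocI A A A))
  ∘ assoc A A (A ⊗o A).

Definition is_hopf_algebra (A : Obj C) (mu : Mor (A ⊗o A) A) (eta : Mor unit_obj A)
    (Delta : Mor A (A ⊗o A)) (eps : Mor A unit_obj) (S : Mor A A) : Prop :=
  is_algebra mu eta /\
  is_coalgebra Delta eps /\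
  Delta ∘ mu = (mu ⊗ mu) ∘ Psi12 A ∘ (Delta ⊗ Delta) /\
  eps ∘ mu = lunit unit_obj ∘ (eps ⊗ eps) /\
  Delta ∘ eta = (eta ⊗ eta) ∘ lunitI unit_obj /\
  eps ∘ eta = idm unit_obj /\
  mu ∘ (S ⊗ idm A) ∘ Delta = eta ∘ eps /\
  mu ∘ (idm A ⊗ S) ∘ Delta = eta ∘ eps.

Definition is_bimodule (A : Obj C) (mu : Mor (A ⊗o A) A) (eta : Mor unit_obj A)
    (M : Obj C) (l : Mor (A ⊗o M) M) (r : Mor (M ⊗o A) M) : Prop :=
  l ∘ (mu ⊗ idm M) = l ∘ (idm A ⊗ l) ∘ assoc A A M /\
  l ∘ (eta ⊗ idm M) = lunit M /\
  r ∘ (r ⊗ idm A) = r ∘ (idm M ⊗ mu) ∘ assoc M A A /\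
  r ∘ (idm M ⊗ eta) = runit M /\
  l ∘ (idm A ⊗ r) ∘ assoc A M A = r ∘ (l ⊗ idm A).

(* The morphism  ◀_R = ◁ ▷_{0,1} (σ S^{-1} ⊗ id^{⊗2}) Ψ_{0,1} (id_M ⊗ Δ) : M ⊗ A -> M,
   with the associativity constraints made explicit. *)
Definition blackR (A M : Obj C) (Delta : Mor A (A ⊗o A)) (sigma Sinv : Mor A A)
    (l : Mor (A ⊗o M) M) (r : Mor (M ⊗o A) M) : Mor (M ⊗o A) M :=
  r ∘ (l ⊗ idm A) ∘ assocI A M A
  ∘ ((sigma ∘ Sinv) ⊗ idm (M ⊗o A))
  ∘ (assoc A M A ∘ (braid M A ⊗ idm A) ∘ assocI M A A)
  ∘ (idm M ⊗ Delta).

End Structures.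

(* Main.v *)
Require Import Defs.
From mathcomp Require Import all_boot all_algebra.
Set Implicit Arguments. Unset Strict Implicit. Unset Printing Implicit Defensive. Set Maximal Implicit Insertion.

Section Tools.
Variable C : BraidedCat.
Local Notation Ob := (Obj C).
Local Notation I := (@unit_obj C).

Lemma axs : cat_axioms C. Proof. exact: bc_axioms. Qed.

Lemma compA {a b c d : Ob} {f : Mor a b} {g : Mor b c} {h : Mor c d} : h ∘ (g ∘ f) = h ∘ g ∘ f.
Proof. by case: axs. Qed.
Lemma idl {a b : Ob} {f : Mor a b} : idm b ∘ f = f.
Proof. by case: axs => _ [H _]. Qed.
Lemma idr {a b : Ob} {f : Mor a b} : f ∘ idm a = f.
Proof. by case: axs => _ [_ [H _]]. Qed.
Lemma tid {a c : Ob} : idm a ⊗ idm c = idm (a ⊗o c).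
Proof. by case: axs => _ [_ [_ [_ [_ [H _]]]]]. Qed.
Lemma tcomp {a b e c d k : Ob} {f : Mor a b} {f' : Mor b e} {g : Mor c d} {g' : Mor d k} :
  (f' ∘ f) ⊗ (g' ∘ g) = (f' ⊗ g') ∘ (f ⊗ g).
Proof. by case: axs => _ [_ [_ [_ [_ [_ [H _]]]]]]. Qed.
Lemma aIa {a b c : Ob} : assocI a b c ∘ assoc a b c = idm _.
Proof. by case: axs => [_ [_ [_ [_ [_ [_ [_ [_ [_ [H [_ [_ [_ [_ [_ [_ [_ [_ [_ [_ [_ [_ [_ [_ _]]]]]]]]]]]]]]]]]]]]]]]]. Qed.
Lemma aaI {a b c : Ob} : assoc a b c ∘ assocI a b c = idm _.
Proof. by case: axs => [_ [_ [_ [_ [_ [_ [_ [_ [_ [_ [H [_ [_ [_ [_ [_ [_ [_ [_ [_ [_ [_ [_ [_ _]]]]]]]]]]]]]]]]]]]]]]]]. Qed.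
Lemma anat {a a' b b' c c' : Ob} {f : Mor a a'} {g : Mor b b'} {h : Mor c c'} :
  assoc a' b' c' ∘ ((f ⊗ g) ⊗ h) = (f ⊗ (g ⊗ h)) ∘ assoc a b c.
Proof. by case: axs => [_ [_ [_ [_ [_ [_ [_ [_ [_ [_ [_ [H [_ [_ [_ [_ [_ [_ [_ [_ [_ [_ [_ [_ _]]]]]]]]]]]]]]]]]]]]]]]]. Qed.
Lemma lIl {a : Ob} : lunitI a ∘ lunit a = idm _.
Proof. by case: axs => [_ [_ [_ [_ [_ [_ [_ [_ [_ [_ [_ [_ [H [_ [_ [_ [_ [_ [_ [_ [_ [_ [_ [_ _]]]]]]]]]]]]]]]]]]]]]]]]. Qed.
Lemma llI {a : Ob} : lunit a ∘ lunitI a = idm _.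
Proof. by case: axs => [_ [_ [_ [_ [_ [_ [_ [_ [_ [_ [_ [_ [_ [H [_ [_ [_ [_ [_ [_ [_ [_ [_ [_ _]]]]]]]]]]]]]]]]]]]]]]]]. Qed.
Lemma lnat {a b : Ob} {f : Mor a b} : lunit b ∘ (idm I ⊗ f) = f ∘ lunit a.
Proof. by case: axs => [_ [_ [_ [_ [_ [_ [_ [_ [_ [_ [_ [_ [_ [_ [H [_ [_ [_ [_ [_ [_ [_ [_ [_ _]]]]]]]]]]]]]]]]]]]]]]]]. Qed.
Lemma rIr {a : Ob} : runitI a ∘ runit a = idm _.
Proof. by case: axs => [_ [_ [_ [_ [_ [_ [_ [_ [_ [_ [_ [_ [_ [_ [_ [H [_ [_ [_ [_ [_ [_ [_ [_ _]]]]]]]]]]]]]]]]]]]]]]]]. Qed.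
Lemma rrI {a : Ob} : runit a ∘ runitI a = idm _.
Proof. by case: axs => [_ [_ [_ [_ [_ [_ [_ [_ [_ [_ [_ [_ [_ [_ [_ [_ [H [_ [_ [_ [_ [_ [_ [_ _]]]]]]]]]]]]]]]]]]]]]]]]. Qed.
Lemma rnat {a b : Ob} {f : Mor a b} : runit b ∘ (f ⊗ idm I) = f ∘ runit a.
Proof. by case: axs => [_ [_ [_ [_ [_ [_ [_ [_ [_ [_ [_ [_ [_ [_ [_ [_ [_ [H [_ [_ [_ [_ [_ [_ _]]]]]]]]]]]]]]]]]]]]]]]]. Qed.
Lemma pent {a b c d : Ob} :
      (idm a ⊗ assoc b c d) ∘ assoc a (b ⊗o c) d ∘ (assoc a b c ⊗ idm d)
      = assoc a b (c ⊗o d) ∘ assoc (a ⊗o b) c d.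
Proof. by case: axs => [_ [_ [_ [_ [_ [_ [_ [_ [_ [_ [_ [_ [_ [_ [_ [_ [_ [_ [H [_ [_ [_ [_ [_ _]]]]]]]]]]]]]]]]]]]]]]]]. Qed.
Lemma tri {a b : Ob} : (idm a ⊗ lunit b) ∘ assoc a I b = runit a ⊗ idm b.
Proof. by case: axs => [_ [_ [_ [_ [_ [_ [_ [_ [_ [_ [_ [_ [_ [_ [_ [_ [_ [_ [_ [H [_ [_ [_ [_ _]]]]]]]]]]]]]]]]]]]]]]]]. Qed.
Lemma bIb {a b : Ob} : braidI a b ∘ braid a b = idm _.
Proof. by case: axs => [_ [_ [_ [_ [_ [_ [_ [_ [_ [_ [_ [_ [_ [_ [_ [_ [_ [_ [_ [_ [H [_ [_ [_ _]]]]]]]]]]]]]]]]]]]]]]]]. Qed.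
Lemma bbI {a b : Ob} : braid a b ∘ braidI a b = idm _.
Proof. by case: axs => [_ [_ [_ [_ [_ [_ [_ [_ [_ [_ [_ [_ [_ [_ [_ [_ [_ [_ [_ [_ [_ [H [_ [_ _]]]]]]]]]]]]]]]]]]]]]]]]. Qed.
Lemma bnat {a a' b b' : Ob} {f : Mor a a'} {g : Mor b b'} :
      braid a' b' ∘ (f ⊗ g) = (g ⊗ f) ∘ braid a b.
Proof. by case: axs => [_ [_ [_ [_ [_ [_ [_ [_ [_ [_ [_ [_ [_ [_ [_ [_ [_ [_ [_ [_ [_ [_ [H [_ _]]]]]]]]]]]]]]]]]]]]]]]]. Qed.
Lemma hex1 {a b c : Ob} :
      assoc b c a ∘ braid a (b ⊗o c) ∘ assoc a b c
      = (idm b ⊗ braid a c) ∘ assoc b a c ∘ (braid a b ⊗ idm c).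
Proof. by case: axs => [_ [_ [_ [_ [_ [_ [_ [_ [_ [_ [_ [_ [_ [_ [_ [_ [_ [_ [_ [_ [_ [_ [_ [H _]]]]]]]]]]]]]]]]]]]]]]]]. Qed.
Lemma hex2 {a b c : Ob} :
      assocI c a b ∘ braid (a ⊗o b) c ∘ assocI a b c
      = (braid a c ⊗ idm b) ∘ assocI a c b ∘ (idm a ⊗ braid b c).
Proof. by case: axs => [_ [_ [_ [_ [_ [_ [_ [_ [_ [_ [_ [_ [_ [_ [_ [_ [_ [_ [_ [_ [_ [_ [_ [_ H]]]]]]]]]]]]]]]]]]]]]]]]. Qed.

Lemma ctx1 {a b : Ob} {x y : Mor a b} : x = y -> x = y. Proof. by []. Qed.
Lemma ctx2 {a b c : Ob} {x : Mor b c} {y : Mor a b} {z : Mor a c} :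
  x ∘ y = z -> forall d (w : Mor c d), w ∘ x ∘ y = w ∘ z.
Proof. by move=> E d w; rewrite -compA E. Qed.
Lemma ctx3 {a b c e : Ob} {x : Mor c e} {y : Mor b c} {u : Mor a b} {z : Mor a e} :
  x ∘ y ∘ u = z -> forall d (w : Mor e d), w ∘ x ∘ y ∘ u = w ∘ z.
Proof. by move=> E d w; rewrite -E !compA. Qed.
Lemma ctx4 {a b c e k : Ob} {x : Mor e k} {x' : Mor c e} {y : Mor b c} {u : Mor a b} {z : Mor a k} :
  x ∘ x' ∘ y ∘ u = z -> forall d (w : Mor k d), w ∘ x ∘ x' ∘ y ∘ u = w ∘ z.
Proof. by move=> E d w; rewrite -E !compA. Qed.
Lemma ctx5 {a b c e k k' : Ob} {x0 : Mor k k'} {x : Mor e k} {x' : Mor c e} {y : Mor b c} {u : Mor a b} {z : Mor a k'} :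
  x0 ∘ x ∘ x' ∘ y ∘ u = z -> forall d (w : Mor k' d), w ∘ x0 ∘ x ∘ x' ∘ y ∘ u = w ∘ z.
Proof. by move=> E d w; rewrite -E !compA. Qed.
Lemma ctx6 {a b c e k k' k'' : Ob} {x1 : Mor k' k''} {x0 : Mor k k'} {x : Mor e k} {x' : Mor c e} {y : Mor b c} {u : Mor a b} {z : Mor a k''} :
  x1 ∘ x0 ∘ x ∘ x' ∘ y ∘ u = z -> forall d (w : Mor k'' d), w ∘ x1 ∘ x0 ∘ x ∘ x' ∘ y ∘ u = w ∘ z.
Proof. by move=> E d w; rewrite -E !compA. Qed.

Lemma ctx7 {a b c e k k' k'' k3 : Ob} {x2 : Mor k'' k3} {x1 : Mor k' k''} {x0 : Mor k k'} {x : Mor e k} {x' : Mor c e} {y : Mor b c} {u : Mor a b} {z : Mor a k3} :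
  x2 ∘ x1 ∘ x0 ∘ x ∘ x' ∘ y ∘ u = z -> forall d (w : Mor k3 d), w ∘ x2 ∘ x1 ∘ x0 ∘ x ∘ x' ∘ y ∘ u = w ∘ z.
Proof. by move=> E d w; rewrite -E !compA. Qed.
Lemma ctx8 {a b c e k k' k'' k3 k4 : Ob} {x3 : Mor k3 k4} {x2 : Mor k'' k3} {x1 : Mor k' k''} {x0 : Mor k k'} {x : Mor e k} {x' : Mor c e} {y : Mor b c} {u : Mor a b} {z : Mor a k4} :
  x3 ∘ x2 ∘ x1 ∘ x0 ∘ x ∘ x' ∘ y ∘ u = z -> forall d (w : Mor k4 d), w ∘ x3 ∘ x2 ∘ x1 ∘ x0 ∘ x ∘ x' ∘ y ∘ u = w ∘ z.
Proof. by move=> E d w; rewrite -E !compA. Qed.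
Tactic Notation "rw" uconstr(E) := first [ rewrite (ctx1 E) | rewrite (ctx2 E) | rewrite (ctx3 E) | rewrite (ctx4 E)
   | rewrite (ctx5 E) | rewrite (ctx6 E) | rewrite (ctx7 E) | rewrite (ctx8 E) ]; rewrite ?compA ?tid ?idl ?idr.
Tactic Notation "rwr" uconstr(E) := first [ rewrite (ctx1 (esym E)) | rewrite (ctx2 (esym E)) | rewrite (ctx3 (esym E)) | rewrite (ctx4 (esym E))
   | rewrite (ctx5 (esym E)) | rewrite (ctx6 (esym E)) | rewrite (ctx7 (esym E)) | rewrite (ctx8 (esym E)) ]; rewrite ?compA ?tid ?idl ?idr.

Lemma anatI {a a' b b' c c' : Ob} {f : Mor a a'} {g : Mor b b'} {h : Mor c c'} :
  assocI a' b' c' ∘ (f ⊗ (g ⊗ h)) = ((f ⊗ g) ⊗ h) ∘ assocI a b c.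
Proof.
rewrite -[LHS]idr -aaI compA. rwr anat. by rw aIa.
Qed.

Lemma tcompl {a b e c : Ob} {f : Mor a b} {f' : Mor b e} :
  (f' ∘ f) ⊗ idm c = (f' ⊗ idm c) ∘ (f ⊗ idm c).
Proof. by rewrite -{1}[idm c]idl tcomp. Qed.
Lemma tcompr {a b e c : Ob} {f : Mor a b} {f' : Mor b e} :
  idm c ⊗ (f' ∘ f) = (idm c ⊗ f') ∘ (idm c ⊗ f).
Proof. by rewrite -{1}[idm c]idl tcomp. Qed.
Lemma tsplitL {a b c d : Ob} {f : Mor a b} {g : Mor c d} : f ⊗ g = (f ⊗ idm d) ∘ (idm a ⊗ g).
Proof. by rewrite -tcomp idl idr. Qed.
Lemma tsplitR {a b c d : Ob} {f : Mor a b} {g : Mor c d} : f ⊗ g = (idm b ⊗ g) ∘ (f ⊗ idm c).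
Proof. by rewrite -tcomp idl idr. Qed.
Lemma cancelR {a b c : Ob} {f g : Mor b c} (h : Mor a b) (h' : Mor b a) :
  h ∘ h' = idm b -> f ∘ h = g ∘ h -> f = g.
Proof. by move=> H E; rewrite -[f]idr -[g]idr -H !compA E. Qed.
Lemma cancelL {a b c : Ob} {f g : Mor a b} (h : Mor b c) (h' : Mor c b) :
  h' ∘ h = idm b -> h ∘ f = h ∘ g -> f = g.
Proof. by move=> H E; rewrite -[f]idl -[g]idl -H -!compA E. Qed.
Lemma lfaith {a b : Ob} {f g : Mor a b} : idm I ⊗ f = idm I ⊗ g -> f = g.
Proof. by move=> E; rewrite -[f]idr -llI compA -lnat E lnat -compA llI idr. Qed.
Lemma rfaith {a b : Ob} {f g : Mor a b} : f ⊗ idm I = g ⊗ idm I -> f = g.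
Proof. by move=> E; rewrite -[f]idr -rrI compA -rnat E rnat -compA rrI idr. Qed.
Lemma bnatI {a a' b b' : Ob} {f : Mor a a'} {g : Mor b b'} :
      braidI a' b' ∘ (g ⊗ f) = (f ⊗ g) ∘ braidI a b.
Proof.
rewrite -[LHS]idr -bbI compA. rwr bnat. by rw bIb.
Qed.

Lemma K1 {b c : Ob} : lunit (b ⊗o c) ∘ assoc I b c = lunit b ⊗ idm c.
Proof.
apply: lfaith.
apply: (@cancelR _ _ _ _ _ (assoc I (I ⊗o b) c ∘ (assoc I I b ⊗ idm c))
                 ((assocI I I b ⊗ idm c) ∘ assocI I (I ⊗o b) c)).
  rewrite !compA; rwr tcompl; by rewrite aaI tid idr aaI.
rewrite tcompr !compA. rw pent. rw tri. rewrite -tid. rwr anat.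
rwr tri. rewrite tcompl !compA. rw anat. done.
Qed.
Lemma K1' {b c : Ob} : (lunit b ⊗ idm c) ∘ assocI I b c = lunit (b ⊗o c).
Proof. by rewrite -K1 -compA aaI idr. Qed.

Lemma U1 {a : Ob} : lunit a ∘ braid a I = runit a.
Proof.
have E c : runit a ⊗ idm c = (lunit a ∘ braid a I) ⊗ idm c.
  apply: (@cancelL _ _ _ _ _ (braid a c) (braidI a c)); first exact: bIb.
  transitivity (lunit (c ⊗o a) ∘ assoc I c a ∘ braid a (I ⊗o c) ∘ assoc a I c).
    rewrite K1. rwr bnat. by rw tri.
  rw hex1. rw lnat. rw K1. by rwr tcompl.
by apply: rfaith; rewrite E.
Qed.

Lemma U2 {c : Ob} : runit c ∘ braid I c = lunit c.
Proof.
have E b : lunit c ⊗ idm b = (runit c ∘ braid I c) ⊗ idm b.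
  apply: (@cancelR _ _ _ _ _ (assocI I c b ∘ (idm I ⊗ braid b c)) ((idm I ⊗ braidI b c) ∘ assoc I c b)).
    rewrite !compA; rwr tcompr; by rewrite bbI tid idr aIa.
  transitivity ((idm c ⊗ lunit b) ∘ assoc c I b ∘ (assocI c I b ∘ braid (I ⊗o b) c ∘ assocI I b c)).
    rewrite !compA. rw aaI. rwr bnat. rw K1'. rw K1'. by rewrite lnat.
  rewrite hex2 !compA tri. by rwr tcompl.
by apply: rfaith; rewrite E.
Qed.
End Tools.
Arguments cancelR {C a b c f g} h h' _ _.
Arguments cancelL {C a b c f g} h h' _ _.
Tactic Notation "rw" uconstr(E) := first [ rewrite (ctx1 E) | rewrite (ctx2 E) | rewrite (ctx3 E) | rewrite (ctx4 E)
   | rewrite (ctx5 E) | rewrite (ctx6 E) | rewrite (ctx7 E) | rewrite (ctx8 E) ]; rewrite ?compA ?tid ?idl ?idr.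
Tactic Notation "rwr" uconstr(E) := first [ rewrite (ctx1 (esym E)) | rewrite (ctx2 (esym E)) | rewrite (ctx3 (esym E)) | rewrite (ctx4 (esym E))
   | rewrite (ctx5 (esym E)) | rewrite (ctx6 (esym E)) | rewrite (ctx7 (esym E)) | rewrite (ctx8 (esym E)) ]; rewrite ?compA ?tid ?idl ?idr.

Tactic Notation "rwR" uconstr(E) := first [ rewrite [in RHS](ctx1 E) | rewrite [in RHS](ctx2 E) | rewrite [in RHS](ctx3 E) | rewrite [in RHS](ctx4 E)
   | rewrite [in RHS](ctx5 E) | rewrite [in RHS](ctx6 E) | rewrite [in RHS](ctx7 E) | rewrite [in RHS](ctx8 E) ]; rewrite ?compA ?tid ?idl ?idr.
Tactic Notation "rwrR" uconstr(E) := first [ rewrite [in RHS](ctx1 (esym E)) | rewrite [in RHS](ctx2 (esym E)) | rewrite [in RHS](ctx3 (esym E)) | rewrite [in RHS](ctx4 (esym E))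
   | rewrite [in RHS](ctx5 (esym E)) | rewrite [in RHS](ctx6 (esym E)) | rewrite [in RHS](ctx7 (esym E)) | rewrite [in RHS](ctx8 (esym E)) ]; rewrite ?compA ?tid ?idl ?idr.
Tactic Notation "rwL" uconstr(E) := first [ rewrite [in LHS](ctx1 E) | rewrite [in LHS](ctx2 E) | rewrite [in LHS](ctx3 E) | rewrite [in LHS](ctx4 E)
   | rewrite [in LHS](ctx5 E) | rewrite [in LHS](ctx6 E) | rewrite [in LHS](ctx7 E) | rewrite [in LHS](ctx8 E) ]; rewrite ?compA ?tid ?idl ?idr.
Tactic Notation "rwrL" uconstr(E) := first [ rewrite [in LHS](ctx1 (esym E)) | rewrite [in LHS](ctx2 (esym E)) | rewrite [in LHS](ctx3 (esym E)) | rewrite [in LHS](ctx4 (esym E))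
   | rewrite [in LHS](ctx5 (esym E)) | rewrite [in LHS](ctx6 (esym E)) | rewrite [in LHS](ctx7 (esym E)) | rewrite [in LHS](ctx8 (esym E)) ]; rewrite ?compA ?tid ?idl ?idr.


Section More.
Variable C : BraidedCat.
Local Notation Ob := (Obj C).
Local Notation I := (@unit_obj C).

Lemma K2 {a b : Ob} : runit (a ⊗o b) = (idm a ⊗ runit b) ∘ assoc a b I.
Proof.
apply: rfaith. apply: (cancelL (assoc a b I) (assocI a b I)); first exact: aIa.
rewrite -tri -tid !compA. rw anat. rwr pent. rwr tcompr. rewrite tri. rwr anat.
by rwr tcompl.
Qed.
Lemma K2' {a b : Ob} : runit (a ⊗o b) ∘ assocI a b I = idm a ⊗ runit b.
Proof. by rewrite K2 -compA aaI idr. Qed.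

Lemma P1 {a b c d : Ob} :
  assoc a (b ⊗o c) d ∘ (assoc a b c ⊗ idm d) ∘ assocI (a ⊗o b) c d
  = (idm a ⊗ assocI b c d) ∘ assoc a b (c ⊗o d).
Proof.
transitivity ((idm a ⊗ assocI b c d) ∘ (idm a ⊗ assoc b c d) ∘ assoc a (b ⊗o c) d
   ∘ (assoc a b c ⊗ idm d) ∘ assocI (a ⊗o b) c d).
  by rwr tcompr; rewrite aIa ?tid ?idl.
rw pent. by rw aaI.
Qed.

Lemma P2 {a b c d : Ob} :
  assoc (a ⊗o b) c d ∘ (assocI a b c ⊗ idm d) ∘ assocI a (b ⊗o c) d
  = assocI a b (c ⊗o d) ∘ (idm a ⊗ assoc b c d).
Proof.
transitivity (assocI a b (c ⊗o d) ∘ (idm a ⊗ assoc b c d) ∘ assoc a (b ⊗o c) d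
   ∘ (assoc a b c ⊗ idm d) ∘ (assocI a b c ⊗ idm d) ∘ assocI a (b ⊗o c) d).
  by rw pent; rw aIa.
by rwr tcompl; rewrite aaI ?tid ?idr; rw aaI.
Qed.

Lemma P3 {a b c d : Ob} :
  (assocI a b c ⊗ idm d) ∘ assocI a (b ⊗o c) d ∘ (idm a ⊗ assocI b c d)
  = assocI (a ⊗o b) c d ∘ assocI a b (c ⊗o d).
Proof.
apply: (cancelL (assoc a b (c ⊗o d) ∘ assoc (a ⊗o b) c d)
                (assocI (a ⊗o b) c d ∘ assocI a b (c ⊗o d))).
  by rewrite !compA; rw aIa; rewrite aIa.
rewrite !compA. rw aaI. rewrite aaI. rwr pent.
rwr tcompl. rewrite aaI ?tid ?idr. rw aaI. by rwr tcompr; rewrite aaI ?tid.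
Qed.

Lemma ichg {a b c d : Ob} {f : Mor a b} {g : Mor c d} :
  (idm b ⊗ g) ∘ (f ⊗ idm c) = (f ⊗ idm d) ∘ (idm a ⊗ g).
Proof. by rewrite -!tcomp !idl !idr. Qed.

Lemma anatS {a a' b b' c c' : Ob} {f : Mor a a'} {g : Mor b b'} {h : Mor c c'} :
  (f ⊗ g) ⊗ h = assocI a' b' c' ∘ (f ⊗ (g ⊗ h)) ∘ assoc a b c.
Proof. rwr anat. by rw aIa. Qed.
Lemma anatS2 {a b c c' : Ob} {h : Mor c c'} :
  idm (a ⊗o b) ⊗ h = assocI a b c' ∘ (idm a ⊗ (idm b ⊗ h)) ∘ assoc a b c.
Proof. by rewrite -tid anatS. Qed.
Lemma P3' {a b c d : Ob} :
  (assocI a b c ⊗ idm d) ∘ assocI a (b ⊗o c) d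
  = assocI (a ⊗o b) c d ∘ assocI a b (c ⊗o d) ∘ (idm a ⊗ assoc b c d).
Proof. rewrite -P3 -!compA -tcompr aIa tid. by rewrite !idr. Qed.
Lemma hex2S {a b c : Ob} :
  braid (a ⊗o b) c = assoc c a b ∘ (braid a c ⊗ idm b) ∘ assocI a c b ∘ (idm a ⊗ braid b c) ∘ assoc a b c.
Proof. rwr hex2. rw aaI. by rw aIa. Qed.
Lemma hex1S {a b c : Ob} :
  braid a (b ⊗o c) = assocI b c a ∘ (idm b ⊗ braid a c) ∘ assoc b a c ∘ (braid a b ⊗ idm c) ∘ assocI a b c.
Proof. rwr hex1. rw aIa. by rw aaI. Qed.

Lemma StructPhi {x y z w : Ob} :
  (assocI x w y ⊗ idm z) ∘ ((idm x ⊗ braid y w) ⊗ idm z) ∘ (assoc x y w ⊗ idm z)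
  ∘ assocI (x ⊗o y) w z ∘ (idm (x ⊗o y) ⊗ braid z w) ∘ assoc (x ⊗o y) z w
  = assocI (x ⊗o w) y z ∘ assocI x w (y ⊗o z) ∘ (idm x ⊗ assoc w y z)
  ∘ (idm x ⊗ (braid y w ⊗ idm z)) ∘ (idm x ⊗ assocI y w z) ∘ (idm x ⊗ (idm y ⊗ braid z w))
  ∘ (idm x ⊗ assoc y z w) ∘ assoc x (y ⊗o z) w ∘ (assoc x y z ⊗ idm w).
Proof.
rewrite [(_ ⊗ braid y w) ⊗ _]anatS [idm (x ⊗o y) ⊗ _]anatS2 !compA.
rw P1. rw aaI. rwr pent. rw P3'. done.
Qed.

Lemma anatR2 {a a' b c : Ob} {f : Mor a a'} :
  (f ⊗ idm (b ⊗o c)) ∘ assoc a b c = assoc a' b c ∘ ((f ⊗ idm b) ⊗ idm c).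
Proof. by rewrite -tid anat. Qed.
Lemma anatIR2 {a a' b c : Ob} {f : Mor a a'} :
  assocI a' b c ∘ (f ⊗ idm (b ⊗o c)) = ((f ⊗ idm b) ⊗ idm c) ∘ assocI a b c.
Proof. by rewrite -tid anatI. Qed.
Lemma anatL2 {a b c c' : Ob} {h : Mor c c'} :
  assoc a b c' ∘ (idm (a ⊗o b) ⊗ h) = (idm a ⊗ (idm b ⊗ h)) ∘ assoc a b c.
Proof. by rewrite -tid anat. Qed.
Lemma anatIL2 {a b c c' : Ob} {h : Mor c c'} :
  (idm (a ⊗o b) ⊗ h) ∘ assocI a b c = assocI a b c' ∘ (idm a ⊗ (idm b ⊗ h)).
Proof. by rewrite -tid anatI. Qed.

Lemma tcompL1 {a b e c d : Ob} {f : Mor a b} {f' : Mor b e} {g : Mor c d} :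
  (f' ∘ f) ⊗ g = (f' ⊗ g) ∘ (f ⊗ idm c).
Proof. by rewrite -tcomp idr. Qed.

Lemma StructPsi {x y z w : Ob} :
  assoc (x ⊗o z) y w ∘ (assocI x z y ⊗ idm w) ∘ ((idm x ⊗ braid y z) ⊗ idm w)
  ∘ (assoc x y z ⊗ idm w) ∘ assocI (x ⊗o y) z w
  = assocI x z (y ⊗o w) ∘ (idm x ⊗ assoc z y w) ∘ (idm x ⊗ (braid y z ⊗ idm w))
    ∘ (idm x ⊗ assocI y z w) ∘ assoc x y (z ⊗o w).
Proof. rewrite [(_ ⊗ braid y z) ⊗ _]anatS !compA. rw P2. by rw P1. Qed.

Lemma Q1 {a b c d : Ob} :
  (assoc a b c ⊗ idm d) ∘ assocI (a ⊗o b) c d ∘ assocI a b (c ⊗o d)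
  = assocI a (b ⊗o c) d ∘ (idm a ⊗ assocI b c d).
Proof. rwrL P3. rwrL tcompl. by rewrite aaI ?tid ?idl. Qed.

Lemma Q2 {a b c d : Ob} :
  assoc a b (c ⊗o d) ∘ assoc (a ⊗o b) c d ∘ (assocI a b c ⊗ idm d)
  = (idm a ⊗ assoc b c d) ∘ assoc a (b ⊗o c) d.
Proof. rewrite -pent. rwr tcompl. by rewrite aaI ?tid ?idr. Qed.

Lemma Core {m x y z W V : Ob} (h : Mor (y ⊗o W) (z ⊗o V)) :
  (assoc m x z ⊗ idm V) ∘ assocI (m ⊗o x) z V ∘ (idm (m ⊗o x) ⊗ h) ∘ assoc (m ⊗o x) y W
  ∘ (assocI m x y ⊗ idm W)
  = assocI m (x ⊗o z) V ∘ (idm m ⊗ assocI x z V) ∘ (idm m ⊗ (idm x ⊗ h))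
    ∘ (idm m ⊗ assoc x y W) ∘ assoc m (x ⊗o y) W.
Proof. rewrite [idm (m ⊗o x) ⊗ h]anatS2 !compA. rw Q1. by rw Q2. Qed.
End More.


Section Hopf.
Variable C : BraidedCat.
Local Notation Ob := (Obj C).
Local Notation I := (@unit_obj C).
Variable A : Ob.
Variables (mu : Mor (A ⊗o A) A) (eta : Mor I A) (D : Mor A (A ⊗o A)) (eps : Mor A I) (S : Mor A A).
Hypothesis massoc : mu ∘ (mu ⊗ idm A) = mu ∘ (idm A ⊗ mu) ∘ assoc A A A.
Hypothesis munitl : mu ∘ (eta ⊗ idm A) = lunit A.
Hypothesis munitr : mu ∘ (idm A ⊗ eta) = runit A.
Hypothesis coassoc : (D ⊗ idm A) ∘ D = assocI A A A ∘ (idm A ⊗ D) ∘ D.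
Hypothesis counitl : (eps ⊗ idm A) ∘ D = lunitI A.
Hypothesis counitr : (idm A ⊗ eps) ∘ D = runitI A.
Hypothesis Dmu : D ∘ mu = (mu ⊗ mu) ∘ Psi12 A ∘ (D ⊗ D).
Hypothesis emu : eps ∘ mu = lunit I ∘ (eps ⊗ eps).
Hypothesis antiL : mu ∘ (S ⊗ idm A) ∘ D = eta ∘ eps.
Hypothesis antiR : mu ∘ (idm A ⊗ S) ∘ D = eta ∘ eps.

Lemma TI {X : Ob} (F : Mor (X ⊗o A) A) :
  mu ∘ ((mu ∘ (F ⊗ idm A) ∘ assocI X A A ∘ (idm X ⊗ D)) ⊗ S) ∘ assocI X A A ∘ (idm X ⊗ D) = F.
Proof.
rewrite [_ ⊗ S]tsplitR !tcompl !compA.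
rw ichg. rw massoc. rewrite -[idm (A ⊗o A)]tid. rw anat. rw anat.
rwr anatI. rwr tcompr. rewrite coassoc !tcompr !compA. rw P3. rw aaI.
rw anatI. rwr tsplitL. rewrite [F ⊗ D]tsplitR !compA.
rwr tcompr. rwr tcompr. rewrite antiR tcompr !compA. rw munitr. rw ichg. rw rnat.
rewrite K2 -tid !compA. rw anat. rw aaI. rwr tcompr. rwr tcompr.
by rewrite -compA counitr rrI tid idr.
Qed.

Lemma Dmu' : D ∘ mu = (mu ⊗ mu) ∘ assocI A A (A ⊗o A)
  ∘ (idm A ⊗ (assoc A A A ∘ (braid A A ⊗ idm A) ∘ assocI A A A)) ∘ assoc A A (A ⊗o A) ∘ (D ⊗ D).
Proof. by rewrite Dmu /Psi12 !compA. Qed.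

Lemma SL1 :
  assoc (A ⊗o A) A A ∘ (assocI A A A ⊗ idm A) ∘ ((idm A ⊗ braid A A) ⊗ idm A)
  ∘ (assoc A A A ⊗ idm A) ∘ ((D ⊗ idm A) ⊗ idm A) ∘ assocI A A A ∘ (idm A ⊗ D)
  = Psi12 A ∘ (D ⊗ D).
Proof.
rwr anatI. rwr tsplitL. rewrite [(_ ⊗ braid _ _) ⊗ _]anatS !compA.
rw P2. rw P1. rewrite /Psi12 !tcompr !compA. done.
Qed.

Lemma TR : mu ∘ ((S ∘ lunit A ∘ (eps ⊗ idm A)) ⊗ idm A) ∘ assocI A A A ∘ (idm A ⊗ D)
  = eta ∘ lunit I ∘ (eps ⊗ eps).
Proof.
rewrite !tcompl !compA. rwr anatI. rw K1'. rwr tsplitL. rewrite [eps ⊗ D]tsplitR !compA.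
rw lnat. rw antiL. rwr (@lnat _ _ _ eps). by rwr tsplitR.
Qed.

Local Notation Phi := (assocI A A A ∘ (idm A ⊗ braid A A) ∘ assoc A A A ∘ (D ⊗ idm A)).

Lemma TL : mu ∘ ((mu ∘ ((S ∘ mu) ⊗ idm A) ∘ Phi) ⊗ idm A) ∘ assocI A A A ∘ (idm A ⊗ D)
  = eta ∘ lunit I ∘ (eps ⊗ eps).
Proof.
rewrite !tcompl !compA. rw massoc. rw anat. rw anat. rw SL1.
rw ichg. rw ichg. rwr tsplitL. rwr Dmu'. rw antiL. by rw emu.
Qed.

Lemma I1 : mu ∘ ((S ∘ mu) ⊗ idm A) ∘ Phi = S ∘ lunit A ∘ (eps ⊗ idm A).
Proof.
rewrite -[LHS]TI -[RHS]TI. by rewrite TL TR.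
Qed.

Lemma coassoc' : (idm A ⊗ D) ∘ D = assoc A A A ∘ (D ⊗ idm A) ∘ D.
Proof. by rewrite -compA coassoc !compA aaI idl. Qed.

Lemma CE' : braid A A = lunit (A ⊗o A) ∘ (eps ⊗ braid A A) ∘ assoc A A A ∘ (D ⊗ idm A).
Proof.
rewrite [eps ⊗ braid A A]tsplitR !compA. rw lnat. rewrite -[idm (A ⊗o A)]tid. rwr anat.
rw K1. rwr tcompl. rwr tcompl. by rewrite -compA counitl llI tid idr.
Qed.

Lemma PhiPhi :
  (assocI A A A ⊗ idm A) ∘ ((idm A ⊗ braid A A) ⊗ idm A) ∘ (assoc A A A ⊗ idm A)
  ∘ ((D ⊗ idm A) ⊗ idm A) ∘ assocI A A A ∘ (idm A ⊗ braid A A) ∘ assoc A A A ∘ (D ⊗ idm A)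
  = assocI (A ⊗o A) A A ∘ (idm (A ⊗o A) ⊗ D) ∘ assocI A A A ∘ (idm A ⊗ braid A A)
    ∘ assoc A A A ∘ (D ⊗ idm A).
Proof.
rwr anatI. rwr ichg. rw anatR2. rewrite StructPhi.
rewrite [idm (A ⊗o A) ⊗ D]anatS2 !compA. rwR aaI. rwrR tcompr. rwrR bnat. rewrite hex2S !tcompr !compA.
rwrR anat. rwrR tcompl. by rewrite coassoc' !tcompl !compA.
Qed.

Lemma Santi : S ∘ mu = mu ∘ (S ⊗ S) ∘ braid A A.
Proof.
have E : mu ∘ ((S ∘ lunit A ∘ (eps ⊗ idm A)) ⊗ S) ∘ Phi = mu ∘ (S ⊗ S) ∘ braid A A.
  rewrite [braid A A in RHS]CE' !tcompL1 ?tcompl !compA.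
  rwrL anatI. rwL K1'. by rwrL tsplitL.
rewrite -E -I1 [_ ⊗ S]tsplitR !tcompl !compA.
rw PhiPhi. rw ichg. rw massoc. rw anatL2. rw anat. rw anat. rw aaI.
rwr tcompr. rwr tcompl. rw ichg. rwr tcompr. rewrite antiR tcompr !compA.
rwr ichg. rw munitr. rw rnat. rw anatIL2. rw K2'. rwr tcompr. rwr tcompr.
rwr bnat. rw U2. rewrite tcompr !compA. rwr anat. rw tri. rwr tcompl. rwr tcompl.
by rewrite -[runit A ∘ _ ∘ D]compA counitr rrI tid idr.
Qed.
End Hopf.


Section Module.
Variable C : BraidedCat.
Local Notation Ob := (Obj C).
Local Notation I := (@unit_obj C).
Variables (A M : Ob).
Variables (mu : Mor (A ⊗o A) A) (tau : Mor A A) (l : Mor (A ⊗o M) M) (r : Mor (M ⊗o A) M).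
Hypothesis lmod : l ∘ (mu ⊗ idm M) = l ∘ (idm A ⊗ l) ∘ assoc A A M.
Hypothesis lr : l ∘ (idm A ⊗ r) ∘ assoc A M A = r ∘ (l ⊗ idm A).
Hypothesis tauM : tau ∘ mu = mu ∘ (tau ⊗ tau) ∘ braid A A.

Lemma lr' : l ∘ (idm A ⊗ r) = r ∘ (l ⊗ idm A) ∘ assocI A M A.
Proof. by rewrite -lr -compA aaI idr. Qed.
Lemma ll' : l ∘ (idm A ⊗ l) = l ∘ (mu ⊗ idm M) ∘ assocI A A M.
Proof. by rewrite lmod -compA aaI idr. Qed.

Lemma F2 : l ∘ (tau ⊗ idm M) ∘ braid M A ∘ (r ⊗ idm A)
  = r ∘ ((l ∘ (tau ⊗ idm M) ∘ braid M A) ⊗ idm A) ∘ assocI M A A ∘ (idm M ⊗ braid A A) ∘ assoc M A A.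
Proof.
rewrite !tcompl !compA. rwL bnat. rwrL ichg. rwL lr'. rwL anatIR2.
rewrite [braid (M ⊗o A) A]hex2S !compA. by rwL aIa.
Qed.

Lemma F1 : l ∘ (tau ⊗ idm M) ∘ braid M A ∘ ((l ∘ (tau ⊗ idm M) ∘ braid M A) ⊗ idm A)
  = l ∘ (tau ⊗ idm M) ∘ braid M A ∘ (idm M ⊗ mu) ∘ assoc M A A.
Proof.
rewrite !tcompl !compA. rwL bnat. rwL bnat. rwL bnat. rwrL ichg. rwL ll'. rwL anatIR2. rwL anatI.
rewrite [braid (M ⊗o A) A]hex2S !compA. rwrL hex1. rwL aIa. rwL aaI.
rwL bnat. rwrL tcompl. rwrL tcompl. rwrL tcompl. rwrL tsplitL. rwrL tauM.
rwL tcompl. by rwrL bnat.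
Qed.
End Module.


Section Assembly.
Variable C : BraidedCat.
Local Notation Ob := (Obj C).
Variables (A M : Ob).
Variables (mu : Mor (A ⊗o A) A) (D : Mor A (A ⊗o A)) (Lt : Mor (M ⊗o A) M) (r : Mor (M ⊗o A) M).
Hypothesis HF1 : Lt ∘ (Lt ⊗ idm A) = Lt ∘ (idm M ⊗ mu) ∘ assoc M A A.
Hypothesis HF2 : Lt ∘ (r ⊗ idm A) = r ∘ (Lt ⊗ idm A) ∘ assocI M A A ∘ (idm M ⊗ braid A A) ∘ assoc M A A.
Hypothesis rmod : r ∘ (r ⊗ idm A) = r ∘ (idm M ⊗ mu) ∘ assoc M A A.
Hypothesis Dmu' : D ∘ mu = (mu ⊗ mu) ∘ assocI A A (A ⊗o A)
  ∘ (idm A ⊗ (assoc A A A ∘ (braid A A ⊗ idm A) ∘ assocI A A A)) ∘ assoc A A (A ⊗o A) ∘ (D ⊗ D).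

Local Notation K := (assoc A A A ∘ (braid A A ⊗ idm A) ∘ assocI A A A).
Lemma StructMain :
  (assoc M A A ⊗ idm (A ⊗o A)) ∘ assocI (M ⊗o A) A (A ⊗o A) ∘ (idm (M ⊗o A) ⊗ K)
  ∘ assoc (M ⊗o A) A (A ⊗o A) ∘ (assocI M A A ⊗ idm (A ⊗o A)) ∘ ((idm M ⊗ D) ⊗ D)
  = assocI M (A ⊗o A) (A ⊗o A) ∘ (idm M ⊗ assocI A A (A ⊗o A)) ∘ (idm M ⊗ (idm A ⊗ K))
    ∘ (idm M ⊗ assoc A A (A ⊗o A)) ∘ (idm M ⊗ (D ⊗ D)) ∘ assoc M A A.
Proof. rwrR anat. by rwL (Core _). Qed.

Lemma Assemble :
  r ∘ (Lt ⊗ idm A) ∘ assocI M A A ∘ (idm M ⊗ D) ∘ ((r ∘ (Lt ⊗ idm A) ∘ assocI M A A ∘ (idm M ⊗ D)) ⊗ idm A)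
  = r ∘ (Lt ⊗ idm A) ∘ assocI M A A ∘ (idm M ⊗ D) ∘ (idm M ⊗ mu) ∘ assoc M A A.
Proof.
rewrite !tcompl !compA. rwL ichg. rwL anatIR2. rwrL (@tcompl _ _ _ _ _ (r ⊗ idm A) Lt). rewrite HF2 !tcompl !compA.
rwL rmod. rwL anat. rwL ichg. rwL StructPsi. rwrL tcompr. rwrL tcompr.
rwL ichg. rwL anat. rwL ichg. rwL (@ichg _ _ _ _ _ Lt K). rwL anatIR2.
rwL (@ichg _ _ _ _ _ Lt mu). rwL (@ichg _ _ _ _ _ (Lt ⊗ idm A) mu).
rwrL (@tcompl _ _ _ _ _ (Lt ⊗ idm A) Lt). rewrite HF1 !tcompl !compA.
rwrL (@ichg _ _ _ _ _ (assoc M A A) mu). rwrL tsplitL. rwL StructMain.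
rwrR tcompr. rewrite Dmu' ![idm M ⊗ (_ ∘ _)]tcompr !compA. rwR anatI.
by rewrite [(idm M ⊗ mu) ⊗ mu]tsplitL !compA.
Qed.
End Assembly.


Theorem mainTheorem4 (C : BraidedCat) (A M : Obj C)
    (mu : Mor (A ⊗o A) A) (eta : Mor unit_obj A) (sigma : Mor A A)
    (Delta : Mor A (A ⊗o A)) (eps : Mor A unit_obj) (S Sinv : Mor A A)
    (l : Mor (A ⊗o M) M) (r : Mor (M ⊗o A) M) :
  is_ribbon_algebra mu eta sigma ->
  is_hopf_algebra mu eta Delta eps S ->
  S ∘ Sinv = idm A -> Sinv ∘ S = idm A ->
  is_bimodule mu eta l r ->
  blackR Delta sigma Sinv l r ∘ (blackR Delta sigma Sinv l r ⊗ idm A)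
  = blackR Delta sigma Sinv l r ∘ (idm M ⊗ mu) ∘ assoc M A A.
Proof.
move=> [[massoc [munitl munitr]] [_ [ribb _]]]
  [_ [[coassoc [counitl counitr]] [Dmu [emu [_ [_ [antiL antiR]]]]]]] SSi SiS
  [lmod [_ [rmod [_ lr]]]].
have HS := Santi massoc munitr coassoc counitl counitr Dmu emu antiL antiR.
have HSi : Sinv ∘ mu = mu ∘ (Sinv ⊗ Sinv) ∘ braidI A A.
  apply: (cancelL S Sinv SiS). rewrite !compA SSi idl. rw HS. rw bnat. rwr tcomp.
  rewrite SSi tid idr. by rw bbI.
have HT : (sigma ∘ Sinv) ∘ mu = mu ∘ ((sigma ∘ Sinv) ⊗ (sigma ∘ Sinv)) ∘ braid A A.
  rewrite -[(sigma ∘ Sinv) ∘ mu]compA HSi ?compA ribb ?compA. rw bnat. rw bbI. rw bnat.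
  by rwr tcomp.
have HF1 := F1 lmod HT.
have HF2 := F2 (sigma ∘ Sinv) lr.
have HD := Dmu' Dmu.
have HA := Assemble HF1 HF2 rmod HD.
have EB : blackR Delta sigma Sinv l r
  = r ∘ ((l ∘ ((sigma ∘ Sinv) ⊗ idm M) ∘ braid M A) ⊗ idm A) ∘ assocI M A A ∘ (idm M ⊗ Delta).
  rewrite /blackR !compA. rwL anatIR2. rwL aIa. by rewrite !tcompl !compA.
by rewrite EB.
Qed.
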